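(* Let $\mathcal{G}$ be a group prevariety over a finite alphabet $A$. Then $\mathit{SF}(\mathcal{G}) = \mathrm{FO}(<,\mathbb{P}_{\mathcal{G}})$.
   Context: Fix a finite alphabet $A$. A prevariety is a class of regular languages over $A$ containing $\emptyset$ and $A^*$, closed under union, intersection, complement, and under the quotients $u^{-1}L=\{w\mid uw\in L\}$ and $Lu^{-1}=\{w\mid wu\in L\}$. A group prevariety is a prevariety all of whose languages are recognized by morphisms into finite groups. $\mathit{SF}(\mathcal{G})$ is the least class containing $\mathcal{G}$ and all $\{a\}$ ($a\in A$), closed under union, complement and concatenation. A word $w=a_1\cdots a_n$ is viewed as a structure with domain $\{0,\dots,n+1\}$; positions $1,\dots,n$ are labeled $a_1,\dots,a_n$ and $0,n+1$ unlabeled; for $i<j$, $w(i,j)=a_{i+1}\cdots a_{j-1}$. First-order formulas use variables over positions, constants $\mathit{min},\mathit{max}$ (interpreted as $0$, $n+1$), equality, the signature's predicates, Boolean connectives and quantifiers. Label predicates $a(x)$ hold iff position $x$ has label $a$. $\mathrm{FO}(<,\mathbb{P}_{\mathcal{G}})$ is the class of languages defined by first-order sentences using the label predicates, the linear order $<$ on positions, and the unary predicates $P_L$ for $L\in\mathcal{G}$, where $P_L(i)$ holds iff $0<i$ and $w(0,i)\in L$. *)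

(* Defs.v *)
From mathcomp Require Import all_boot all_fingroup.
Set Implicit Arguments. Unset Strict Implicit. Unset Printing Implicit Defensive.

Section Langs.
Variable A : finType.

Definition lang := seq A -> Prop.

Definition regular (L : lang) : Prop :=
  exists (Q : finType) (delta : Q -> A -> Q) (q0 : Q) (F : pred Q),
    forall w, L w <-> F (foldl delta q0 w).

Definition lang_empty : lang := fun _ => False.
Definition lang_full : lang := fun _ => True.
Definition lang_union (L1 L2 : lang) : lang := fun w => L1 w \/ L2 w.
Definition lang_inter (L1 L2 : lang) : lang := fun w => L1 w /\ L2 w.
Definition lang_compl (L : lang) : lang := fun w => ~ L w.
Definition lquot (u : seq A) (L : lang) : lang := fun w => L (u ++ w).
Definition rquot (L : lang) (u : seq A) : lang := fun w => L (w ++ u).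
Definition lang_concat (L1 L2 : lang) : lang :=
  fun w => exists u v, w = u ++ v /\ L1 u /\ L2 v.
Definition lang_letter (a : A) : lang := fun w => w = [:: a].

Definition prevariety (G : lang -> Prop) : Prop :=
  (forall L, G L -> regular L) /\
  G lang_empty /\ G lang_full /\
  (forall L1 L2, G L1 -> G L2 -> G (lang_union L1 L2)) /\
  (forall L1 L2, G L1 -> G L2 -> G (lang_inter L1 L2)) /\
  (forall L, G L -> G (lang_compl L)) /\
  (forall u L, G L -> G (lquot u L)) /\
  (forall u L, G L -> G (rquot L u)).

(* L is recognized by a morphism A^* -> gT into a finite group
   (a monoid morphism from the free monoid is determined by the images
   of the letters). *)
Definition group_recognized (L : lang) : Prop :=
  exists (gT : finGroupType) (h : A -> gT) (S : {set gT}),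
    forall w, L w <-> ((\prod_(a <- w) h a)%g \in S).

Definition group_prevariety (G : lang -> Prop) : Prop :=
  prevariety G /\ (forall L, G L -> group_recognized L).

Inductive SF (G : lang -> Prop) : lang -> Prop :=
| SF_base L : G L -> SF G L
| SF_letter a : SF G (lang_letter a)
| SF_union L1 L2 : SF G L1 -> SF G L2 -> SF G (lang_union L1 L2)
| SF_compl L : SF G L -> SF G (lang_compl L)
| SF_concat L1 L2 : SF G L1 -> SF G L2 -> SF G (lang_concat L1 L2).

Inductive term : Type :=
| TVar of nat
| TMin
| TMax.

Inductive formula : Type :=
| FTrue
| FFalse
| FLabel of A & term
| FLt of term & term
| FEq of term & term
| FPred of lang & term
| FNot of formula
| FAnd of formula & formula
| FOr of formula & formula
| FImp of formula & formula
| FExists of nat & formula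
| FForall of nat & formula.

(* Positions of w are 0 .. size w + 1; min = 0, max = size w + 1. *)
Definition eval_term (w : seq A) (nu : nat -> nat) (t : term) : nat :=
  match t with
  | TVar x => nu x
  | TMin => 0
  | TMax => (size w).+1
  end.

Definition upd (nu : nat -> nat) (x i : nat) : nat -> nat :=
  fun y => if y == x then i else nu y.

Fixpoint sat (w : seq A) (nu : nat -> nat) (f : formula) : Prop :=
  match f with
  | FTrue => True
  | FFalse => False
  | FLabel a t =>
      let i := eval_term w nu t in
      0 < i <= size w /\ nth a w i.-1 = a
  | FLt t1 t2 => eval_term w nu t1 < eval_term w nu t2
  | FEq t1 t2 => eval_term w nu t1 = eval_term w nu t2
  | FPred L t =>
      let i := eval_term w nu t in
      (* P_L(i) iff 0 < i and w(0,i) = a_1 ... a_{i-1} is in L *)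
      0 < i /\ L (take i.-1 w)
  | FNot g => ~ sat w nu g
  | FAnd g h => sat w nu g /\ sat w nu h
  | FOr g h => sat w nu g \/ sat w nu h
  | FImp g h => sat w nu g -> sat w nu h
  | FExists x g => exists i, i <= (size w).+1 /\ sat w (upd nu x i) g
  | FForall x g => forall i, i <= (size w).+1 -> sat w (upd nu x i) g
  end.

Definition term_free (x : nat) (t : term) : bool :=
  if t is TVar y then y == x else false.

Fixpoint free_in (x : nat) (f : formula) : bool :=
  match f with
  | FTrue | FFalse => false
  | FLabel _ t | FPred _ t => term_free x t
  | FLt t1 t2 | FEq t1 t2 => term_free x t1 || term_free x t2
  | FNot g => free_in x g
  | FAnd g h | FOr g h | FImp g h => free_in x g || free_in x h
  | FExists y g | FForall y g => (y != x) && free_in x g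
  end.

Definition sentence (f : formula) : Prop := forall x, ~~ free_in x f.

Fixpoint preds_in (G : lang -> Prop) (f : formula) : Prop :=
  match f with
  | FPred L _ => G L
  | FNot g | FExists _ g | FForall _ g => preds_in G g
  | FAnd g h | FOr g h | FImp g h => preds_in G g /\ preds_in G h
  | _ => True
  end.

Definition FO_def (G : lang -> Prop) (L : lang) : Prop :=
  exists f : formula, sentence f /\ preds_in G f /\
    forall w, L w <-> sat w (fun _ => 0) f.

End Langs.

(* Main.v *)
Require Import Defs.
From mathcomp Require Import all_boot all_fingroup.
From Stdlib Require Import FunctionalExtensionality PropExtensionality Classical ClassicalEpsilon.
From mathcomp Require Import zify.
Set Implicit Arguments. Unset Strict Implicit. Unset Printing Implicit Defensive.

Lemma SF_ext (A : finType) (G : lang A -> Prop) (L L' : lang A) :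
  (forall w, L w <-> L' w) -> SF G L -> SF G L'.
Proof.
move=> H; have -> : L' = L; last by [].
apply: functional_extensionality => w; apply: propositional_extensionality; split; apply H.
Qed.

Lemma SF_inter (A : finType) (G : lang A -> Prop) L1 L2 :
  SF G L1 -> SF G L2 -> SF G (lang_inter L1 L2).
Proof.
move=> H1 H2.
apply: (SF_ext (L := lang_compl (lang_union (lang_compl L1) (lang_compl L2)))); last first.
  by apply: SF_compl; apply: SF_union; apply: SF_compl.
move=> w; rewrite /lang_compl /lang_union /lang_inter; split.
- move=> H; split; apply: NNPP => N; apply: H; tauto.
- tauto.
Qed.

Definition trip (A : finType) (C : lang A) (b : A) (C' : lang A) : lang A :=
  lang_concat (lang_concat C (lang_letter b)) C'.

Lemma tripP (A : finType) (C : lang A) b C' w :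
  trip C b C' w <-> exists s s', w = s ++ b :: s' /\ C s /\ C' s'.
Proof.
rewrite /trip /lang_concat /lang_letter; split.
- move=> [u [v [-> [[u1 [u2 [-> [Hu1 ->]]]] Hv]]]].
  by exists u1, v; rewrite -catA.
- move=> [s [s' [-> [Hs Hs']]]].
  exists (s ++ [:: b]), s'; split; first by rewrite -catA.
  by split=> //; exists s, [:: b].
Qed.

Lemma SF_trip (A : finType) (G : lang A -> Prop) C b C' :
  SF G C -> SF G C' -> SF G (trip C b C').
Proof. by move=> H H'; apply: SF_concat => //; apply: SF_concat => //; apply: SF_letter. Qed.

Definition prof_eq (A : finType) (Ms : seq (lang A)) (u u' : seq A) :=
  forall M, List.In M Ms -> (M u <-> M u').

Lemma profile_classes (A : finType) (G : lang A -> Prop) (Ms : seq (lang A)) :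
  (forall M, List.In M Ms -> SF G M) -> SF G (@lang_full A) ->
  exists Out : seq (lang A), (forall O, List.In O Out -> SF G O) /\
    (forall u, exists O, List.In O Out /\ O u) /\
    (forall O, List.In O Out -> forall v t, O v -> (O t <-> prof_eq Ms v t)).
Proof.
move=> HMs Hfull; elim: Ms HMs => [|M Ms IH] HMs.
  exists [:: @lang_full A]; split; first by move=> O [<-|[]].
  split; first by move=> u; exists (@lang_full A); split; [left|].
  by move=> O [<-|[]] v t _; split=> // _ M [].
have [Out [HO1 [HO2 HO3]]] := IH (fun M' H => HMs M' (or_intror H)).
have HM : SF G M by apply: HMs; left.
exists (List.app (List.map (fun O => lang_inter O M) Out)
                 (List.map (fun O => lang_inter O (lang_compl M)) Out)).
split.
  move=> O /List.in_app_iff [] /List.in_map_iff [O' [<- HO']].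
    by apply: SF_inter => //; apply: HO1.
  by apply: SF_inter; [apply: HO1|apply: SF_compl].
split.
  move=> u; have [O [HO Ou]] := HO2 u.
  case: (classic (M u)) => Mu.
    exists (lang_inter O M); split; last by [].
    by apply/List.in_app_iff; left; apply/List.in_map_iff; exists O.
  exists (lang_inter O (lang_compl M)); split; last by [].
  by apply/List.in_app_iff; right; apply/List.in_map_iff; exists O.
move=> O /List.in_app_iff [] /List.in_map_iff [O' [<- HO']] v t [Ov Mv].
  split.
    move=> [Ot Mt] M' [<-|HM']; first by tauto.
    by apply: (proj1 (HO3 O' HO' v t Ov) Ot).
  move=> H; split; last by apply/(H M); [left|].
  by apply/(HO3 O' HO' v t Ov) => M' HM'; apply: H; right.
split.
  move=> [Ot Mt] M' [<-|HM'].
    by rewrite /lang_compl in Mv Mt; tauto.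
  by apply: (proj1 (HO3 O' HO' v t Ov) Ot).
move=> H; split.
  by apply/(HO3 O' HO' v t Ov) => M' HM'; apply: H; right.
by move=> Mt; apply: Mv; apply/(H M); [left|].
Qed.


Definition E0 (A : finType) (Pi : seq (lang A)) (u u' : seq A) :=
  forall L, List.In L Pi -> forall x y, L (x ++ u ++ y) <-> L (x ++ u' ++ y).

Fixpoint Ek (A : finType) (Pi : seq (lang A)) (k : nat) (u u' : seq A) : Prop :=
  match k with
  | 0 => E0 Pi u u'
  | k.+1 => Ek Pi k u u' /\
     (forall s b s', u = s ++ b :: s' ->
        exists t t', u' = t ++ b :: t' /\ Ek Pi k s t /\ Ek Pi k s' t') /\
     (forall t b t', u' = t ++ b :: t' ->
        exists s s', u = s ++ b :: s' /\ Ek Pi k s t /\ Ek Pi k s' t')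
  end.

Lemma Ek_refl (A : finType) Pi k (u : seq A) : Ek Pi k u u.
Proof.
elim: k u => [|k IH] u /=; first by move=> L _ x y.
split; first exact: IH.
split; move=> s b s' ->; exists s, s'; split => //; split; apply: IH.
Qed.

Lemma Ek_sym (A : finType) Pi k (u u' : seq A) : Ek Pi k u u' -> Ek Pi k u' u.
Proof.
elim: k u u' => [|k IH] u u' /=.
  by move=> H L HL x y; split; move/(H L HL x y).
move=> [H0 [H1 H2]]; split; first exact: IH.
split.
  move=> s b s' Hs; have [t [t' [-> [? ?]]]] := H2 s b s' Hs.
  by exists t, t'; split => //; split; apply: IH.
move=> t b t' Ht; have [s [s' [-> [? ?]]]] := H1 t b t' Ht.
by exists s, s'; split => //; split; apply: IH.
Qed.

Lemma Ek_le (A : finType) Pi k m (u u' : seq A) : m <= k -> Ek Pi k u u' -> Ek Pi m u u'.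
Proof.
elim: k => [|k IH]; first by rewrite leqn0 => /eqP ->.
rewrite leq_eqVlt => /orP [/eqP -> //|]; rewrite ltnS => Hm [H _].
exact: IH.
Qed.

Lemma split_cat (A : eqType) (u v s s' : seq A) b :
  u ++ v = s ++ b :: s' ->
  (exists s1, u = s ++ b :: s1 /\ s' = s1 ++ v) \/
  (exists s2, v = s2 ++ b :: s' /\ s = u ++ s2).
Proof.
elim: u s => [|c u IH] s /=.
  by move=> ->; right; exists s.
case: s => [|d s] /= [-> H].
  by left; exists u; rewrite H.
have [[s1 [-> ->]]|[s2 [-> ->]]] := IH s H.
  by left; exists s1.
by right; exists s2.
Qed.

Lemma Ek_cat (A : finType) Pi k (u u' v v' : seq A) :
  Ek Pi k u u' -> Ek Pi k v v' -> Ek Pi k (u ++ v) (u' ++ v').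
Proof.
elim: k u u' v v' => [|k IH] u u' v v' /=.
  move=> Hu Hv L HL x y.
  rewrite -catA (Hu L HL x (v ++ y)) !catA -(catA (x ++ u')) (Hv L HL (x ++ u') y).
  by rewrite !catA.
move=> [Hu0 [Hu1 Hu2]] [Hv0 [Hv1 Hv2]].
split; first exact: IH.
split.
  move=> s b s' /split_cat [[s1 [Hu ->]]|[s2 [Hv ->]]].
    have [t [t' [-> [Hst Hst']]]] := Hu1 s b s1 Hu.
    exists t, (t' ++ v'); split; first by rewrite -catA.
    by split => //; apply: IH.
  have [t [t' [-> [Hst Hst']]]] := Hv1 s2 b s' Hv.
  exists (u' ++ t), t'; split; first by rewrite -catA.
  by split => //; apply: IH.
move=> t b t' /split_cat [[s1 [Hu ->]]|[s2 [Hv ->]]].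
  have [s [s' [-> [Hst Hst']]]] := Hu2 t b s1 Hu.
  exists s, (s' ++ v); split; first by rewrite -catA.
  by split => //; apply: IH.
have [s [s' [-> [Hst Hst']]]] := Hv2 s2 b t' Hv.
exists (u ++ s), s'; split; first by rewrite -catA.
by split => //; apply: IH.
Qed.

Lemma Ek_catl (A : finType) Pi k (u u' v v' : seq A) b :
  Ek Pi k u u' -> Ek Pi k v v' -> Ek Pi k (u ++ b :: v) (u' ++ b :: v').
Proof.
move=> Hu Hv; rewrite -[b :: v]cat1s -[b :: v']cat1s; apply: Ek_cat => //.
by apply: Ek_cat => //; apply: Ek_refl.
Qed.

Definition ph (A : finType) (gT : finGroupType) (h : A -> gT) (w : seq A) : gT :=
  (\prod_(a <- w) h a)%g.

Lemma ph_cat (A : finType) (gT : finGroupType) (h : A -> gT) (u v : seq A) : ph h (u ++ v) = (ph h u * ph h v)%g.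
Proof. by rewrite /ph big_cat. Qed.

Lemma E0_single (A : finType) (G : lang A -> Prop) L :
  group_prevariety G -> G L ->
  exists Q : seq (lang A), (forall M, List.In M Q -> G M) /\
    forall u u', (forall x y, L (x ++ u ++ y) <-> L (x ++ u' ++ y)) <-> prof_eq Q u u'.
Proof.
move=> [[_ [_ [_ [_ [_ [_ [Hl Hr]]]]]]] Hg] GL.
have [gT [h [S HS0]]] := Hg L GL.
have HS : forall w, L w <-> ph h w \in S := HS0.
suff: forall P : seq (gT * gT), exists Q : seq (lang A), (forall M, List.In M Q -> G M) /\
    forall u u', (forall x y, (ph h x, ph h y) \in P -> (L (x ++ u ++ y) <-> L (x ++ u' ++ y)))
       <-> prof_eq Q u u'.
  move=> /(_ (enum {: gT * gT})) [Q [HQ1 HQ2]].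
  exists Q; split => // u u'; rewrite -HQ2; split; first by move=> H x y _; apply: H.
  by move=> H x y; apply: H; rewrite mem_enum.
elim=> [|[g1 g2] P [Q [HQ1 HQ2]]].
  exists [::]; split => // u u'; split => _ //.
case: (classic (exists x0 y0, ph h x0 = g1 /\ ph h y0 = g2)) => [[x0 [y0 [Hx0 Hy0]]]|Hno].
  exists (lquot x0 (rquot L y0) :: Q); split.
    by move=> M [<-|HM]; [apply: Hl; apply: Hr|apply: HQ1].
  have key : forall u x y, ph h x = g1 -> ph h y = g2 ->
      (L (x ++ u ++ y) <-> lquot x0 (rquot L y0) u).
    move=> u x y Hx Hy; rewrite /lquot /rquot -catA !HS !ph_cat Hx Hy Hx0 Hy0.
    by [].
  move=> u u'; split.
    move=> H M [<-|HM].
      rewrite -(key u x0 y0 Hx0 Hy0) -(key u' x0 y0 Hx0 Hy0).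
      by apply: H; rewrite inE Hx0 Hy0 eqxx.
    by move: M HM; apply/HQ2 => x y Hxy; apply: H; rewrite inE Hxy orbT.
  move=> H x y; rewrite inE => /orP [/eqP [Hx Hy]|Hxy].
    by rewrite (key u x y Hx Hy) (key u' x y Hx Hy); apply: H; left.
  by move: x y Hxy; apply/HQ2 => M HM; apply: H; right.
exists Q; split => // u u'; rewrite -HQ2; split.
  by move=> H x y Hxy; apply: H; rewrite inE Hxy orbT.
move=> H x y; rewrite inE => /orP [/eqP [Hx Hy]|Hxy]; last by apply: H.
by exfalso; apply: Hno; exists x, y.
Qed.


Lemma In_mem (T : eqType) (x : T) (s : seq T) : x \in s -> List.In x s.
Proof.
elim: s => [|y s IH] //; rewrite inE => /orP [/eqP ->|H]; [by left|by right; apply: IH].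
Qed.

Lemma prof_eq_app (A : finType) (Q Ms : seq (lang A)) u u' :
  prof_eq (List.app Q Ms) u u' <-> prof_eq Q u u' /\ prof_eq Ms u u'.
Proof.
split.
  by move=> H; split=> M HM; apply: H; apply/List.in_app_iff; [left|right].
by move=> [H1 H2] M /List.in_app_iff [] HM; [apply: H1|apply: H2].
Qed.

Definition tri (A : finType) (Out : seq (lang A)) : seq (lang A) :=
  List.flat_map (fun C => List.flat_map (fun b => List.map (fun C' => trip C b C') Out)
     (enum A)) Out.

Lemma triP (A : finType) (Out : seq (lang A)) M :
  List.In M (tri Out) <-> exists C b C', List.In C Out /\ List.In C' Out /\ M = trip C b C'.
Proof.
rewrite /tri List.in_flat_map; split.
  move=> [C [HC /List.in_flat_map [b [_ /List.in_map_iff [C' [<- HC']]]]]].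
  by exists C, b, C'.
move=> [C [b [C' [HC [HC' ->]]]]]; exists C; split => //.
apply/List.in_flat_map; exists b; split; first by apply: In_mem; rewrite mem_enum.
by apply/List.in_map_iff; exists C'.
Qed.

Lemma Ek_profile (A : finType) (G : lang A -> Prop) (Pi : seq (lang A)) :
  group_prevariety G -> (forall L, List.In L Pi -> G L) ->
  forall k, exists Ms : seq (lang A), (forall M, List.In M Ms -> SF G M) /\
    forall u u', Ek Pi k u u' <-> prof_eq Ms u u'.
Proof.
move=> HG HPi; elim=> [|k [Ms [HMs HE]]].
  elim: Pi HPi => [|L Pi IH] HPi.
    exists [::]; split => // u u'; split => _ //; by move=> L [].
  have [Ms [HMs HE]] := IH (fun L' H => HPi L' (or_intror H)).
  have [Q [HQ HQE]] := E0_single HG (HPi L (or_introl erefl)).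
  exists (List.app Q Ms); split.
    by move=> M /List.in_app_iff [] HM; [apply: SF_base; apply: HQ|apply: HMs].
  move=> u u'; rewrite prof_eq_app -HQE -HE /=; split.
    by move=> H; split; [apply: H; left|move=> L' HL'; apply: H; right].
  by move=> [H1 H2] L' [<-|HL']; [apply: H1|apply: H2].
have Hfull : SF G (@lang_full A).
  by apply: SF_base; case: HG => [[_ [_ [? _]]] _].
have [Out [HO1 [HO2 HO3]]] := profile_classes HMs Hfull.
exists (List.app Ms (tri Out)); split.
  move=> M /List.in_app_iff [] HM; first by apply: HMs.
  by move/triP: HM => [C [b [C' [HC [HC' ->]]]]]; apply: SF_trip; apply: HO1.
have Hcl : forall O, List.In O Out -> forall v t, O v -> (O t <-> Ek Pi k v t).
  by move=> O HO v t Ov; rewrite HE; apply: HO3.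
move=> u u'; rewrite prof_eq_app -HE /=; split.
  move=> [H0 [H1 H2]]; split => // M /triP [C [b [C' [HC [HC' ->]]]]].
  rewrite !tripP; split.
    move=> [s [s' [Hu [Cs Cs']]]].
    have [t [t' [-> [Hst Hst']]]] := H1 s b s' Hu.
    by exists t, t'; split => //; split; [apply/(Hcl C HC s)|apply/(Hcl C' HC' s')].
  move=> [t [t' [Hu [Ct Ct']]]].
  have [s [s' [-> [Hst Hst']]]] := H2 t b t' Hu.
  exists s, s'; split => //; split.
    by apply/(Hcl C HC t) => //; apply: Ek_sym.
  by apply/(Hcl C' HC' t') => //; apply: Ek_sym.
move=> [H0 H1]; split => //; split.
  move=> s b s' Hu.
  have [C [HC Cs]] := HO2 s; have [C' [HC' Cs']] := HO2 s'.
  have : trip C b C' u' by apply/(H1 (trip C b C')); [apply/triP; exists C, b, C'|apply/tripP; exists s, s'].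
  move/tripP => [t [t' [-> [Ct Ct']]]].
  by exists t, t'; split => //; split; [apply/(Hcl C HC s)|apply/(Hcl C' HC' s')].
move=> t b t' Hu.
have [C [HC Ct]] := HO2 t; have [C' [HC' Ct']] := HO2 t'.
have : trip C b C' u by apply/(H1 (trip C b C')); [apply/triP; exists C, b, C'|apply/tripP; exists t, t'].
move/tripP => [s [s' [-> [Cs Cs']]]].
exists s, s'; split => //; split; apply: Ek_sym; [apply/(Hcl C HC t)|apply/(Hcl C' HC' t')] => //.
Qed.


Definition infix (T : Type) (w : seq T) (i j : nat) := take (j.-1 - i) (drop i w).

Lemma size_infix (T : Type) (w : seq T) i j : j <= (size w).+1 ->
  size (infix w i j) = j.-1 - i.
Proof. move=> Hj; rewrite /infix size_take size_drop; case: ifP => H; lia. Qed.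

Lemma nth_infix (T : Type) (x0 : T) (w : seq T) i j m : m < j.-1 - i ->
  nth x0 (infix w i j) m = nth x0 w (i + m).
Proof. by move=> Hm; rewrite /infix nth_take // nth_drop. Qed.

Lemma infix0 (T : Type) (w : seq T) i : infix w 0 i = take i.-1 w.
Proof. by rewrite /infix subn0 drop0. Qed.

Lemma infix_full (T : Type) (w : seq T) : infix w 0 (size w).+1 = w.
Proof. by rewrite infix0 /= take_size. Qed.

Lemma infix_split (T : Type) (x0 : T) (w : seq T) i k j :
  i < k -> k < j -> j <= (size w).+1 ->
  infix w i j = infix w i k ++ nth x0 w k.-1 :: infix w k j.
Proof.
move=> Hik Hkj Hj; rewrite /infix.
have -> : j.-1 - i = (k.-1 - i) + (j.-1 - k).+1 by lia.
rewrite takeD drop_drop.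
have -> : k.-1 - i + i = k.-1 by lia.
rewrite [drop k.-1 w](drop_nth x0); last by lia.
rewrite /= prednK //; lia.
Qed.

Lemma cat_inj_size (T : eqType) (s1 s2 t1 t2 : seq T) :
  size s1 = size t1 -> s1 ++ s2 = t1 ++ t2 -> s1 = t1 /\ s2 = t2.
Proof.
move=> Hs /eqP; rewrite eqseq_cat // => /andP [/eqP -> /eqP ->]; by [].
Qed.

Definition tok (xs : seq nat) (t : term) : bool :=
  if t is TVar x then x \in xs else true.

Definition Inv (A : finType) (Pi : seq (lang A)) m (w : seq A) nu (w' : seq A) nu' xs :=
 (forall t, tok xs t -> eval_term w nu t <= (size w).+1 /\ eval_term w' nu' t <= (size w').+1) /\
 (forall t1 t2, tok xs t1 -> tok xs t2 ->
    (eval_term w nu t1 < eval_term w nu t2 <-> eval_term w' nu' t1 < eval_term w' nu' t2)) /\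
 (forall t a, tok xs t -> 0 < eval_term w nu t <= size w ->
    nth a w (eval_term w nu t).-1 = nth a w' (eval_term w' nu' t).-1) /\
 (forall t1 t2, tok xs t1 -> tok xs t2 -> eval_term w nu t1 < eval_term w nu t2 ->
    Ek Pi m (infix w (eval_term w nu t1) (eval_term w nu t2))
            (infix w' (eval_term w' nu' t1) (eval_term w' nu' t2))).

Lemma Inv_sym (A : finType) Pi m (w : seq A) nu w' nu' xs :
  Inv Pi m w nu w' nu' xs -> Inv Pi m w' nu' w nu xs.
Proof.
move=> [H1 [H2 [H3 H4]]]; split; first by move=> t Ht; have := H1 t Ht; tauto.
split; first by move=> t1 t2 Ht1 Ht2; rewrite H2.
split.
  move=> t a Ht Hr.
  have Hmin := H2 TMin t is_true_true Ht; have Hmax := H2 t TMax Ht is_true_true.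
  move: Hmin Hmax; rewrite /= => Hmin Hmax.
  have Hr' : 0 < eval_term w nu t <= size w.
    move: Hr => /andP [Ha Hb]; apply/andP; split; first by apply/Hmin.
    by rewrite -ltnS; apply/Hmax; rewrite ltnS.
  by rewrite (H3 t a Ht).
move=> t1 t2 Ht1 Ht2 Hlt; apply: Ek_sym; apply: H4 => //; by rewrite H2.
Qed.

Lemma Inv_le (A : finType) Pi m (w : seq A) nu w' nu' xs t1 t2 :
  Inv Pi m w nu w' nu' xs -> tok xs t1 -> tok xs t2 ->
  (eval_term w nu t1 <= eval_term w nu t2 <-> eval_term w' nu' t1 <= eval_term w' nu' t2).
Proof.
move=> [_ [H2 _]] Ht1 Ht2; have E := H2 t2 t1 Ht2 Ht1; split => H.
  by rewrite leqNgt; apply/negP => /E Hc; lia.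
by rewrite leqNgt; apply/negP => Hc; have := proj1 E Hc; lia.
Qed.

Lemma Inv_eq (A : finType) Pi m (w : seq A) nu w' nu' xs t1 t2 :
  Inv Pi m w nu w' nu' xs -> tok xs t1 -> tok xs t2 ->
  (eval_term w nu t1 = eval_term w nu t2 <-> eval_term w' nu' t1 = eval_term w' nu' t2).
Proof.
move=> H Ht1 Ht2; have := Inv_le H Ht1 Ht2; have := Inv_le H Ht2 Ht1.
move=> E1 E2; split => He.
  apply/eqP; rewrite eqn_leq; apply/andP; split; [apply/E2|apply/E1]; lia.
apply/eqP; rewrite eqn_leq; apply/andP; split; [apply/E2|apply/E1]; lia.
Qed.

Lemma term_cases (A : finType) y xs s :
  tok (y :: xs) s -> s = TVar y \/
    (tok xs s /\ forall (w : seq A) nu i, eval_term w (upd nu y i) s = eval_term w nu s).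
Proof.
case: s => [x| |] /=; try by right.
rewrite inE => /orP [/eqP ->|Hx]; first by left.
case: (eqVneq x y) => [->|Hne]; first by left.
by right; split => // w nu i; rewrite /upd (negbTE Hne).
Qed.

Lemma ev_upd_y (A : finType) (w : seq A) nu y i : eval_term w (upd nu y i) (TVar y) = i.
Proof. by rewrite /= /upd eqxx. Qed.


Lemma Inv_new (A : finType) Pi m (w : seq A) nu w' nu' xs y i i' :
 Inv Pi m.+1 w nu w' nu' xs ->
 i <= (size w).+1 -> i' <= (size w').+1 ->
 (forall s, tok xs s -> (eval_term w nu s < i <-> eval_term w' nu' s < i') /\
                        (i < eval_term w nu s <-> i' < eval_term w' nu' s)) ->
 (forall a, 0 < i <= size w -> nth a w i.-1 = nth a w' i'.-1) ->
 (forall s, tok xs s ->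
    (eval_term w nu s < i -> Ek Pi m (infix w (eval_term w nu s) i) (infix w' (eval_term w' nu' s) i')) /\
    (i < eval_term w nu s -> Ek Pi m (infix w i (eval_term w nu s)) (infix w' i' (eval_term w' nu' s)))) ->
 Inv Pi m w (upd nu y i) w' (upd nu' y i') (y :: xs).
Proof.
move=> [H1 [H2 [H3 H4]]] Hi Hi' Hb Hc Hd.
split.
  move=> t /(@term_cases A y xs _) [->|[Ht E]]; first by rewrite !ev_upd_y.
  by rewrite !E; apply: H1.
split.
  move=> t1 t2 /(@term_cases A y xs _) [->|[Ht1 E1]] /(@term_cases A y xs _) [->|[Ht2 E2]];
    rewrite ?ev_upd_y ?E1 ?E2.
  - by rewrite !ltnn.
  - exact: (proj2 (Hb _ Ht2)).
  - exact: (proj1 (Hb _ Ht1)).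
  - exact: H2.
split.
  move=> t a /(@term_cases A y xs _) [->|[Ht E]]; rewrite ?ev_upd_y ?E; first exact: Hc.
  exact: H3.
move=> t1 t2 /(@term_cases A y xs _) [->|[Ht1 E1]] /(@term_cases A y xs _) [->|[Ht2 E2]];
  rewrite ?ev_upd_y ?E1 ?E2.
- by rewrite ltnn.
- exact: (proj2 (Hd _ Ht2)).
- exact: (proj1 (Hd _ Ht1)).
- by move=> Hlt; apply: (Ek_le (k := m.+1)) => //; apply: H4.
Qed.

Lemma exists_max (T : Type) (f : T -> nat) (ts : seq T) i :
  (exists t, List.In t ts /\ f t < i) ->
  exists t, List.In t ts /\ f t < i /\ forall t', List.In t' ts -> f t' < i -> f t' <= f t.
Proof.
elim: ts => [|t0 ts IH]; first by move=> [t [[] _]].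
move=> [t [[<-|Ht] Hft]].
  case: (classic (exists t, List.In t ts /\ f t < i)) => [/IH [t1 [Ht1 [Hf1 Hm1]]]|Hno].
    case: (leqP (f t0) (f t1)) => Hc.
      exists t1; split; [by right|split => // t' [<-|Ht'] Hf'] => //; exact: Hm1.
    exists t0; split; [by left|split => // t' [<-|Ht'] Hf'] => //.
    by apply: leq_trans (Hm1 _ Ht' Hf') _; apply: ltnW.
  exists t0; split; [by left|split => // t' [<-|Ht'] Hf'] => //.
  by exfalso; apply: Hno; exists t'.
have [t1 [Ht1 [Hf1 Hm1]]] := IH (ex_intro _ t (conj Ht Hft)).
case: (classic (f t0 < i)) => Hi0.
  case: (leqP (f t0) (f t1)) => Hc.
    exists t1; split; [by right|split => // t' [<-|Ht'] Hf'] => //; exact: Hm1.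
  exists t0; split; [by left|split => // t' [<-|Ht'] Hf'] => //.
  by apply: leq_trans (Hm1 _ Ht' Hf') _; apply: ltnW.
exists t1; split; [by right|split => // t' [<-|Ht'] Hf'] => //; last exact: Hm1.
Qed.

Lemma exists_min (T : Type) (f : T -> nat) (ts : seq T) i :
  (exists t, List.In t ts /\ i < f t) ->
  exists t, List.In t ts /\ i < f t /\ forall t', List.In t' ts -> i < f t' -> f t <= f t'.
Proof.
elim: ts => [|t0 ts IH]; first by move=> [t [[] _]].
move=> [t [[<-|Ht] Hft]].
  case: (classic (exists t, List.In t ts /\ i < f t)) => [/IH [t1 [Ht1 [Hf1 Hm1]]]|Hno].
    case: (leqP (f t1) (f t0)) => Hc.
      exists t1; split; [by right|split => // t' [<-|Ht'] Hf'] => //; exact: Hm1.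
    exists t0; split; [by left|split => // t' [<-|Ht'] Hf'] => //.
    by apply: leq_trans (Hm1 _ Ht' Hf'); apply: ltnW.
  exists t0; split; [by left|split => // t' [<-|Ht'] Hf'] => //.
  by exfalso; apply: Hno; exists t'.
have [t1 [Ht1 [Hf1 Hm1]]] := IH (ex_intro _ t (conj Ht Hft)).
case: (classic (i < f t0)) => Hi0.
  case: (leqP (f t1) (f t0)) => Hc.
    exists t1; split; [by right|split => // t' [<-|Ht'] Hf'] => //; exact: Hm1.
  exists t0; split; [by left|split => // t' [<-|Ht'] Hf'] => //.
  by apply: leq_trans (Hm1 _ Ht' Hf'); apply: ltnW.
exists t1; split; [by right|split => // t' [<-|Ht'] Hf'] => //; last exact: Hm1.
Qed.

Definition tlist (xs : seq nat) : seq term := TMin :: TMax :: List.map TVar xs.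

Lemma tlistP xs t : tok xs t <-> List.In t (tlist xs).
Proof.
split.
  case: t => [x| |] /=; try tauto.
  by move=> Hx; right; right; apply/List.in_map_iff; exists x; split => //; apply: In_mem.
case: t => [x| |] //= [] // [] // /List.in_map_iff [x' [[<-] Hx]].
elim: xs Hx => [|z xs IH] //= [->|H]; rewrite inE ?eqxx //.
by rewrite IH ?orbT.
Qed.


Lemma Inv_ext (A : finType) Pi m (w : seq A) nu w' nu' xs y i :
  Inv Pi m.+1 w nu w' nu' xs -> i <= (size w).+1 ->
  exists i', i' <= (size w').+1 /\ Inv Pi m w (upd nu y i) w' (upd nu' y i') (y :: xs).
Proof.
move=> HI Hi; have HI' := HI; move: HI' => [H1 [H2 [H3 H4]]].
case: (classic (exists t0, tok xs t0 /\ eval_term w nu t0 = i)) => [[t0 [Ht0 Et0]]|Hno].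
  exists (eval_term w' nu' t0); split; first exact: (proj2 (H1 t0 Ht0)).
  subst i; apply: Inv_new => //.
  - exact: (proj2 (H1 t0 Ht0)).
  - by move=> s Hs; split; apply: H2.
  - by move=> a Ha; apply: H3.
  - by move=> s Hs; split => Hlt; apply: (Ek_le (k := m.+1)) => //; apply: H4.
have Hne : forall t, tok xs t -> eval_term w nu t <> i by move=> t Ht E; apply: Hno; exists t.
have Hi0 : 0 < i by have := Hne TMin is_true_true; rewrite /=; lia.
have Hin : i <= size w by have := Hne TMax is_true_true; rewrite /=; lia.
have [tl [Htl [Hl1 Hl2]]] : exists t, List.In t (tlist xs) /\ eval_term w nu t < i /\ forall t', List.In t' (tlist xs) -> eval_term w nu t' < i -> eval_term w nu t' <= eval_term w nu t.
  by apply: (@exists_max _ (fun t => eval_term w nu t)); exists TMin; split; [left|].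
have [th [Hth [Hh1 Hh2]]] : exists t, List.In t (tlist xs) /\ i < eval_term w nu t /\ forall t', List.In t' (tlist xs) -> i < eval_term w nu t' -> eval_term w nu t <= eval_term w nu t'.
  apply: (@exists_min _ (fun t => eval_term w nu t)); exists TMax; split; first by right; left.
  by rewrite /=; lia.
move: Hl1 Hl2 Hh1 Hh2 => /= Hl1 Hl2 Hh1 Hh2.
move/tlistP: Htl => Htl; move/tlistP: Hth => Hth.
have [a0 _] : exists a0 : A, True.
  destruct w as [|c w0]; [by rewrite /= in Hin; lia | by exists c].
set L0 := eval_term w nu tl in Hl1 Hl2 *.
set H0 := eval_term w nu th in Hh1 Hh2 *.
set L1 := eval_term w' nu' tl.
set H1' := eval_term w' nu' th.
have HH0 : H0 <= (size w).+1 by apply: (proj1 (H1 th Hth)).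
have HH1 : H1' <= (size w').+1 by apply: (proj2 (H1 th Hth)).
have HLH : L0 < H0 by apply: ltn_trans Hl1 Hh1.
have HLH' : L1 < H1' by apply/(H2 tl th Htl Hth).
set b := nth a0 w i.-1.
have Hsplit := infix_split a0 Hl1 Hh1 HH0.
have [_ [C1 _]] := H4 tl th Htl Hth HLH.
have [t [t' [Et [Ek1 Ek2]]]] := C1 _ _ _ Hsplit.
have Hsz : size (infix w' L1 H1') = H1'.-1 - L1 by apply: size_infix.
rewrite Et size_cat /= in Hsz.
set i' := (L1 + size t).+1.
have Hi'1 : L1 < i' by rewrite /i'; lia.
have Hi'2 : i' < H1' by rewrite /i'; lia.
have Hsplit' := infix_split a0 Hi'1 Hi'2 HH1.
have Hszt : size (infix w' L1 i') = size t.
  rewrite size_infix; last by lia.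
  by rewrite /i'; lia.
rewrite Et in Hsplit'.
have [Et1 Et2] := cat_inj_size (esym Hszt) Hsplit'.
case: Et2 => Eb Et2.
exists i'; split; first by lia.
apply: Inv_new => //; first by lia.
- move=> s Hs.
  have Hm1 : eval_term w nu s < i -> eval_term w nu s <= L0.
    by move=> Hs'; apply: Hl2 => //; apply/tlistP.
  have Hm2 : i < eval_term w nu s -> H0 <= eval_term w nu s.
    by move=> Hs'; apply: Hh2 => //; apply/tlistP.
  have T1 := Inv_le HI Hs Htl; have T2 := Inv_le HI Hth Hs.
  have N := Hne s Hs.
  move: T1 T2; rewrite -/L0 -/L1 -/H0 -/H1' => T1 T2.
  split; split => Hc.
  + by have := proj1 T1 (Hm1 Hc); lia.
  + case: (ltngtP (eval_term w nu s) i) => // Hc';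
      first [by exfalso; apply: N | by have := proj1 T2 (Hm2 Hc'); lia].
  + by have := proj1 T2 (Hm2 Hc); lia.
  + case: (ltngtP (eval_term w nu s) i) => // Hc';
      first [by exfalso; apply: N | by have := proj1 T1 (Hm1 Hc'); lia].
- move=> a Ha.
  rewrite (set_nth_default a0); last by lia.
  rewrite [in RHS](set_nth_default a0); last by lia.
  by rewrite -Eb.
- move=> s Hs; split => Hlt.
    have Hm1 : eval_term w nu s <= L0 by apply: Hl2 => //; apply/tlistP.
    case: (ltngtP (eval_term w nu s) L0) => Hc; first last.
    + have := proj1 (Inv_eq HI Hs Htl) Hc; rewrite -/L1 => Hc'.
      by rewrite Hc Hc' -Et1.
    + by lia.
    have Hc' : eval_term w' nu' s < L1 by apply/(H2 s tl Hs Htl).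
    rewrite (infix_split a0 Hc Hl1 Hi) (infix_split a0 Hc' Hi'1) //; last by lia.
    rewrite -(H3 tl a0 Htl); last by rewrite -/L0; lia.
    rewrite -/L0 -/L1 -Et1; apply: Ek_catl => //.
    by apply: (Ek_le (k := m.+1)) => //; apply: H4.
  have Hm2 : H0 <= eval_term w nu s by apply: Hh2 => //; apply/tlistP.
  have Hsr := proj1 (H1 s Hs).
  case: (ltngtP H0 (eval_term w nu s)) => Hc; first last.
  + have := proj1 (Inv_eq HI Hth Hs) Hc; rewrite -/H1' => Hc'.
    by rewrite -Hc -Hc' -Et2.
  + by lia.
  have Hc' : H1' < eval_term w' nu' s by apply/(H2 th s Hth Hs).
  rewrite (infix_split a0 Hh1 Hc Hsr) (infix_split a0 Hi'2 Hc' (proj2 (H1 s Hs))).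
  rewrite -(H3 th a0 Hth); last by rewrite -/H0; lia.
  rewrite -/H0 -/H1' -Et2; apply: Ek_catl => //.
  by apply: (Ek_le (k := m.+1)) => //; apply: H4.
Qed.


Fixpoint qd (A : finType) (f : formula A) : nat :=
  match f with
  | FNot g => qd g
  | FAnd g h | FOr g h | FImp g h => maxn (qd g) (qd h)
  | FExists _ g | FForall _ g => (qd g).+1
  | _ => 0
  end.

Fixpoint preds (A : finType) (f : formula A) : seq (lang A) :=
  match f with
  | FPred L _ => [:: L]
  | FNot g | FExists _ g | FForall _ g => preds g
  | FAnd g h | FOr g h | FImp g h => List.app (preds g) (preds h)
  | _ => [::]
  end.

Lemma preds_G (A : finType) (G : lang A -> Prop) (f : formula A) :
  preds_in G f -> forall L, List.In L (preds f) -> G L.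
Proof.
elim: f => //=; try by move=> *; contradiction.
- by move=> L t HG L' [<-|[]].
- by move=> g IHg h IHh [Hg Hh] L /List.in_app_iff [] H; [apply: IHg|apply: IHh].
- by move=> g IHg h IHh [Hg Hh] L /List.in_app_iff [] H; [apply: IHg|apply: IHh].
- by move=> g IHg h IHh [Hg Hh] L /List.in_app_iff [] H; [apply: IHg|apply: IHh].
Qed.

Lemma tok_of xs t : (forall x, term_free x t -> x \in xs) -> tok xs t.
Proof. by case: t => [x| |] //= H; apply: H. Qed.

Lemma EF (A : finType) Pi (phi : formula A) : forall m xs w nu w' nu',
 (forall L, List.In L (preds phi) -> List.In L Pi) ->
 (forall x, free_in x phi -> x \in xs) -> qd phi <= m ->
 Inv Pi m w nu w' nu' xs -> sat w nu phi -> sat w' nu' phi.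
Proof.
elim: phi => [| |a t|t1 t2|t1 t2|L t|g IH|g IHg h IHh|g IHg h IHh|g IHg h IHh|x g IH|x g IH]
  m xs w nu w' nu' HP Hf Hq HI //=.
- have Ht := tok_of Hf; have [H1 [H2 [H3 H4]]] := HI.
  have Hmin := H2 TMin t is_true_true Ht; have Hmax := H2 t TMax Ht is_true_true.
  move: Hmin Hmax => /= Hmin Hmax.
  move=> [/andP [Ha Hb] Hc]; split.
    apply/andP; split; first by apply/Hmin.
    by rewrite -ltnS; apply/Hmax; rewrite ltnS.
  by rewrite -(H3 t a Ht) // Ha Hb.
- have Ht1 : tok xs t1 by apply: tok_of => z Hz; apply: Hf; rewrite /= Hz.
  have Ht2 : tok xs t2 by apply: tok_of => z Hz; apply: Hf; rewrite /= Hz orbT.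
  by have [_ [H2 _]] := HI; move=> Hlt; apply/(H2 t1 t2 Ht1 Ht2).
- have Ht1 : tok xs t1 by apply: tok_of => z Hz; apply: Hf; rewrite /= Hz.
  have Ht2 : tok xs t2 by apply: tok_of => z Hz; apply: Hf; rewrite /= Hz orbT.
  by move=> He; apply/(Inv_eq HI Ht1 Ht2).
- have Ht := tok_of Hf; have [H1 [H2 [H3 H4]]] := HI.
  have Hmin := H2 TMin t is_true_true Ht; move: Hmin => /= Hmin.
  move=> [Hp HL]; split; first by apply/Hmin.
  have := H4 TMin t is_true_true Ht Hp; rewrite /= !infix0 => HE.
  have := Ek_le (leq0n m) HE L (HP L (or_introl erefl)) [::] [::].
  by rewrite /= !cats0 => <-.
- move=> Hn Hs; apply: Hn; apply: (IH m xs w' nu' w nu) => //.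
  exact: Inv_sym.
- move=> [Hg Hh]; split.
    apply: (IHg m xs w nu) => //; first by move=> L HL; apply: HP; apply/List.in_app_iff; left.
      by move=> z Hz; apply: Hf; rewrite /= Hz.
    by move: Hq; rewrite geq_max => /andP [].
  apply: (IHh m xs w nu) => //; first by move=> L HL; apply: HP; apply/List.in_app_iff; right.
    by move=> z Hz; apply: Hf; rewrite /= Hz orbT.
  by move: Hq; rewrite geq_max => /andP [].
- move=> [Hg|Hh]; [left|right].
    apply: (IHg m xs w nu) => //; first by move=> L HL; apply: HP; apply/List.in_app_iff; left.
      by move=> z Hz; apply: Hf; rewrite /= Hz.
    by move: Hq; rewrite geq_max => /andP [].
  apply: (IHh m xs w nu) => //; first by move=> L HL; apply: HP; apply/List.in_app_iff; right.
    by move=> z Hz; apply: Hf; rewrite /= Hz orbT.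
  by move: Hq; rewrite geq_max => /andP [].
- move=> Himp Hg'.
  apply: (IHh m xs w nu) => //; first by move=> L HL; apply: HP; apply/List.in_app_iff; right.
      by move=> z Hz; apply: Hf; rewrite /= Hz orbT.
    by move: Hq; rewrite geq_max => /andP [].
  apply: Himp; apply: (IHg m xs w' nu') => //; first by move=> L HL; apply: HP; apply/List.in_app_iff; left.
      by move=> z Hz; apply: Hf; rewrite /= Hz.
    by move: Hq; rewrite geq_max => /andP [].
  exact: Inv_sym.
- case: m Hq HI => [//|m] Hq HI [i [Hi Hs]].
  have [i' [Hi' HI']] := Inv_ext x HI Hi.
  exists i'; split => //; apply: (IH m (x :: xs) w (upd nu x i)) => //.
  move=> z Hz; rewrite inE; case: (eqVneq z x) => //= Hzx.
  by apply: Hf; rewrite /= eq_sym Hzx.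
- case: m Hq HI => [//|m] Hq HI Hs i' Hi'.
  have [i [Hi HI']] := Inv_ext x (Inv_sym HI) Hi'.
  apply: (IH m (x :: xs) w (upd nu x i)) => //; last by apply: Hs.
    move=> z Hz; rewrite inE; case: (eqVneq z x) => //= Hzx.
    by apply: Hf; rewrite /= eq_sym Hzx.
  exact: Inv_sym.
Qed.

Lemma Inv_top (A : finType) Pi m (w w' : seq A) :
  Ek Pi m w w' -> Inv Pi m w (fun _ => 0) w' (fun _ => 0) [::].
Proof.
move=> HE; split; first by move=> t; case: t => //=.
split; first by move=> t1 t2; case: t1 => [x| |]; case: t2 => [y| |] //=; rewrite !ltnn.
split; first by move=> t a; case: t => [x| |] //=; rewrite ltnn ?andbF.
move=> t1 t2; case: t1 => [x| |]; case: t2 => [y| |] //=; rewrite ?ltnn // => _ _ _.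
by rewrite !infix_full.
Qed.

Lemma SF_union_list (A : finType) (G : lang A -> Prop) (Q : lang A -> Prop) (Out : seq (lang A)) :
  (forall O, List.In O Out -> SF G O) -> SF G (@lang_empty A) ->
  SF G (fun w => exists O, List.In O Out /\ Q O /\ O w).
Proof.
move=> HO He; elim: Out HO => [|O Out IH] HO.
  by apply: (SF_ext (L := @lang_empty A)) => // w; split => // [[O [[] _]]].
have IH' := IH (fun O' H => HO O' (or_intror H)).
case: (classic (Q O)) => HQ.
  apply: (SF_ext (L := lang_union O (fun w => exists O, List.In O Out /\ Q O /\ O w))).
    move=> w; split.
      by move=> [Ow|[O' [H1 [H2 H3]]]]; [exists O; split; [left|]|exists O'; split; [right|]].
    by move=> [O' [[<-|H1] [H2 H3]]]; [left|right; exists O'].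
  by apply: SF_union => //; apply: HO; left.
apply: (SF_ext (L := (fun w => exists O, List.In O Out /\ Q O /\ O w))) => // w; split.
  by move=> [O' [H1 [H2 H3]]]; exists O'; split; [right|].
by move=> [O' [[<-|H1] [H2 H3]]] //; exists O'.
Qed.

Lemma FO_in_SF (A : finType) (G : lang A -> Prop) (L : lang A) :
  group_prevariety G -> FO_def G L -> SF G L.
Proof.
move=> HG [f [Hs [Hp HL]]].
have HPi := preds_G Hp.
have [Ms [HMs HE]] := Ek_profile HG HPi (qd f).
have Hfull : SF G (@lang_full A) by apply: SF_base; case: HG => [[_ [_ [? _]]] _].
have Hempty : SF G (@lang_empty A) by apply: SF_base; case: HG => [[_ [? _]] _].
have [Out [HO1 [HO2 HO3]]] := profile_classes HMs Hfull.
apply: (SF_ext (L := fun w => exists O, List.In O Out /\ (exists u, O u /\ L u) /\ O w)).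
  move=> w; split.
    move=> [O [HO [[u [Ou Lu]] Ow]]].
    have : Ek (preds f) (qd f) u w by rewrite HE; apply/(HO3 O HO u w Ou).
    move/Inv_top => HI.
    apply/(proj2 (HL w)).
    apply: (@EF A (preds f) f (qd f) [::] u _ w _ (fun L H => H) _ (leqnn _) HI (proj1 (HL u) Lu)).
    by move=> x Hx; have := Hs x; rewrite Hx.
  move=> Lw; have [O [HO Ow]] := HO2 w.
  by exists O; split => //; split => //; exists w.
exact: SF_union_list.
Qed.


Lemma P_ext (A : finType) (P : lang A -> Prop) (L L' : lang A) :
  (forall w, L w <-> L' w) -> P L -> P L'.
Proof.
move=> H; have -> : L' = L; last by [].
apply: functional_extensionality => w; apply: propositional_extensionality; split; apply H.
Qed.

Definition pw (T : Type) (u : seq T) n := flatten (nseq n u).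

Lemma ph_pw (A : finType) (gT : finGroupType) (h : A -> gT) u n :
  ph h (pw u n) = (ph h u ^+ n)%g.
Proof.
elim: n => [|n IH]; first by rewrite /ph /pw /= big_nil expg0.
by rewrite /pw /= -/(pw u n) ph_cat IH expgS.
Qed.

Lemma G_prof (A : finType) (G : lang A -> Prop) (Q : seq (lang A)) u0 :
  prevariety G -> (forall M, List.In M Q -> G M) -> G (fun u => prof_eq Q u u0).
Proof.
move=> [_ [_ [Hfull [_ [Hint [Hcomp _]]]]]]; elim: Q => [|M Q IH] HQ.
  by apply: (P_ext (L := @lang_full A)) => // u; split => // _ M [].
have IH' := IH (fun M' H => HQ M' (or_intror H)).
have HM : G M by apply: HQ; left.
case: (classic (M u0)) => Mu0.
  apply: (P_ext (L := lang_inter M (fun u => prof_eq Q u u0))); last by apply: Hint.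
  move=> u; rewrite /lang_inter; split.
    by move=> [Mu HP] M' [<-|HM']; [tauto|apply: HP].
  by move=> H; split; [apply/(H M); [left|]|move=> M' HM'; apply: H; right].
apply: (P_ext (L := lang_inter (lang_compl M) (fun u => prof_eq Q u u0))); last first.
  by apply: Hint => //; apply: Hcomp.
move=> u; rewrite /lang_inter /lang_compl; split.
  by move=> [Mu HP] M' [<-|HM']; [tauto|apply: HP].
move=> H; split; last by move=> M' HM'; apply: H; right.
by move=> Mu; apply: Mu0; apply/(H M); [left|].
Qed.

Definition good_shift (A : finType) (G : lang A -> Prop) (L : lang A) (l : seq (lang A * lang A)) :=
  (forall p, List.In p l -> G p.1 /\ G p.2) /\
  (forall u, exists p, List.In p l /\ p.1 u) /\
  (forall p, List.In p l -> forall u v, p.1 u -> (L v <-> p.2 (u ++ v))).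

Lemma shift_exists (A : finType) (G : lang A -> Prop) (L : lang A) :
  group_prevariety G -> G L -> exists l, good_shift G L l.
Proof.
move=> HG GL; have HG' := HG; case: HG' => [HP Hg].
have HP' := HP; case: HP' => [_ [_ [_ [_ [_ [_ [Hl Hr]]]]]]].
have [gT [h [S HS0]]] := Hg L GL.
have HS : forall w, L w <-> ph h w \in S := HS0.
have [Q [HQ HQE]] := E0_single HG GL.
pose C u0 := fun u => prof_eq Q u u0.
pose M u0 := lquot (pw u0 (#[ph h u0]%g).-1) L.
have key : forall u0 u v, C u0 u -> (L v <-> M u0 (u ++ v)).
  move=> u0 u v Cu; rewrite /M /lquot.
  have := proj2 (HQE u u0) Cu (pw u0 (#[ph h u0]%g).-1) v => ->.
  rewrite !HS !ph_cat ph_pw mulgA -expgSr prednK ?order_gt0 // expg_order mul1g.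
  by [].
suff: forall P : seq gT, exists l, (forall p, List.In p l -> G p.1 /\ G p.2) /\
   (forall u, ph h u \in P -> exists p, List.In p l /\ p.1 u) /\
   (forall p, List.In p l -> forall u v, p.1 u -> (L v <-> p.2 (u ++ v))).
  move=> /(_ (enum gT)) [l [H1 [H2 H3]]]; exists l; split => //; split => // u.
  by apply: H2; rewrite mem_enum.
elim=> [|g P [l [H1 [H2 H3]]]].
  by exists [::]; split => //.
case: (classic (exists u0, ph h u0 = g)) => [[u0 Hu0]|Hno].
  exists ((C u0, M u0) :: l); split.
    move=> p [<-|Hp] /=; last by apply: H1.
    by split; [apply: G_prof|apply: Hl].
  split.
    move=> u; rewrite inE => /orP [/eqP Hu|Hu]; last first.
      by have [p [Hp Hp1]] := H2 u Hu; exists p; split => //; right.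
    exists (C u0, M u0); split; first by left.
    rewrite /= /C; apply/HQE => x y; rewrite !HS !ph_cat Hu Hu0; by [].
  move=> p [<-|Hp] u v /=; first exact: key.
  exact: H3.
exists l; split => //; split => // u; rewrite inE => /orP [/eqP Hu|Hu]; last by apply: H2.
by exfalso; apply: Hno; exists u.
Qed.


Definition tv (t : term) : nat := if t is TVar x then x else 0.

Fixpoint vmax (A : finType) (f : formula A) : nat :=
  match f with
  | FLabel _ t | FPred _ t => tv t
  | FLt t1 t2 | FEq t1 t2 => maxn (tv t1) (tv t2)
  | FNot g => vmax g
  | FAnd g h | FOr g h | FImp g h => maxn (vmax g) (vmax h)
  | FExists x g | FForall x g => maxn x (vmax g)
  | _ => 0
  end.

Definition tr1 (x : nat) (t : term) : term := if t is TMax then TVar x else t.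

Fixpoint Rel1 (A : finType) (x : nat) (f : formula A) : formula A :=
  match f with
  | FTrue => @FTrue A
  | FFalse => @FFalse A
  | FLabel a t => FAnd (@FLt A (tr1 x t) (TVar x)) (FLabel a (tr1 x t))
  | FLt t1 t2 => @FLt A (tr1 x t1) (tr1 x t2)
  | FEq t1 t2 => @FEq A (tr1 x t1) (tr1 x t2)
  | FPred L t => FPred L (tr1 x t)
  | FNot g => FNot (Rel1 x g)
  | FAnd g h => FAnd (Rel1 x g) (Rel1 x h)
  | FOr g h => FOr (Rel1 x g) (Rel1 x h)
  | FImp g h => FImp (Rel1 x g) (Rel1 x h)
  | FExists z g => FExists z (FAnd (FOr (@FLt A (TVar z) (TVar x)) (@FEq A (TVar z) (TVar x))) (Rel1 x g))
  | FForall z g => FForall z (FImp (FOr (@FLt A (TVar z) (TVar x)) (@FEq A (TVar z) (TVar x))) (Rel1 x g))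
  end.

Lemma upd_other nu y i z : z != y -> upd nu y i z = nu z.
Proof. by rewrite /upd => /negbTE ->. Qed.

Lemma upd_same nu y i : upd nu y i y = i.
Proof. by rewrite /upd eqxx. Qed.

Lemma tr1_eval (A : finType) (w : seq A) nu nu' x c t :
  tv t < x -> nu x = c -> 0 < c <= (size w).+1 ->
  (forall y, term_free y t -> nu y = nu' y) ->
  eval_term w nu (tr1 x t) = eval_term (take c.-1 w) nu' t.
Proof.
move=> Ht Hx Hc Hf; case: t Ht Hf => [y| |] //= Ht Hf.
- by apply: Hf.
- by rewrite size_take_min Hx; lia.
Qed.

Lemma Rel1_sat (A : finType) (f : formula A) : forall x (w : seq A) nu nu' c,
  vmax f < x -> nu x = c -> 0 < c <= (size w).+1 ->
  (forall y, free_in y f -> nu y = nu' y /\ nu y <= c) ->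
  (sat w nu (Rel1 x f) <-> sat (take c.-1 w) nu' f).
Proof.
have Hsz : forall (w : seq A) c, 0 < c <= (size w).+1 -> size (take c.-1 w) = c.-1.
  by move=> w c Hc; rewrite size_take_min; lia.
have Hbd : forall (w : seq A) nu c t, (forall y, term_free y t -> nu y <= c) ->
    0 < c <= (size w).+1 -> eval_term (take c.-1 w) nu t <= c.
  move=> w nu c [y| |] /= H Hc; [exact: H|lia|rewrite Hsz //; lia].
elim: f => [| |a t|t1 t2|t1 t2|L t|g IH|g IHg h IHh|g IHg h IHh|g IHg h IHh|z g IH|z g IH]
  x w nu nu' c /= Hv Hx Hc Hf //.
- have E := tr1_eval Hv Hx Hc (fun y H => proj1 (Hf y H)).
  rewrite E Hx Hsz //.
  split.
    move=> [Hlt [/andP [H1 H2] H3]]; split; first by apply/andP; split; lia.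
    by rewrite nth_take //; lia.
  move=> [/andP [H1 H2] H3]; split; first by lia.
  split; first by apply/andP; split; lia.
  by move: H3; rewrite nth_take //; lia.
- have E1 := tr1_eval (leq_ltn_trans (leq_maxl _ _) Hv) Hx Hc
     (fun y H => proj1 (Hf y (introT orP (or_introl H)))).
  have E2 := tr1_eval (leq_ltn_trans (leq_maxr _ _) Hv) Hx Hc
     (fun y H => proj1 (Hf y (introT orP (or_intror H)))).
  by rewrite E1 E2.
- have E1 := tr1_eval (leq_ltn_trans (leq_maxl _ _) Hv) Hx Hc
     (fun y H => proj1 (Hf y (introT orP (or_introl H)))).
  have E2 := tr1_eval (leq_ltn_trans (leq_maxr _ _) Hv) Hx Hc
     (fun y H => proj1 (Hf y (introT orP (or_intror H)))).
  by rewrite E1 E2.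
- have E := tr1_eval Hv Hx Hc (fun y H => proj1 (Hf y H)).
  have Hb : eval_term (take c.-1 w) nu' t <= c.
    apply: Hbd => // y Hy; have [<- ?] := Hf y Hy; by [].
  rewrite E take_takel //; lia.
- by rewrite (IH x w nu nu' c).
- have Hgv : vmax g < x by apply: leq_ltn_trans (leq_maxl _ _) Hv.
  have Hhv : vmax h < x by apply: leq_ltn_trans (leq_maxr _ _) Hv.
  have Hfg : forall y, free_in y g -> nu y = nu' y /\ nu y <= c.
    by move=> y Hy; apply: Hf; rewrite Hy.
  have Hfh : forall y, free_in y h -> nu y = nu' y /\ nu y <= c.
    by move=> y Hy; apply: Hf; rewrite Hy orbT.
  by rewrite (IHg x w nu nu' c Hgv Hx Hc Hfg) (IHh x w nu nu' c Hhv Hx Hc Hfh).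
- have Hgv : vmax g < x by apply: leq_ltn_trans (leq_maxl _ _) Hv.
  have Hhv : vmax h < x by apply: leq_ltn_trans (leq_maxr _ _) Hv.
  have Hfg : forall y, free_in y g -> nu y = nu' y /\ nu y <= c.
    by move=> y Hy; apply: Hf; rewrite Hy.
  have Hfh : forall y, free_in y h -> nu y = nu' y /\ nu y <= c.
    by move=> y Hy; apply: Hf; rewrite Hy orbT.
  by rewrite (IHg x w nu nu' c Hgv Hx Hc Hfg) (IHh x w nu nu' c Hhv Hx Hc Hfh).
- have Hgv : vmax g < x by apply: leq_ltn_trans (leq_maxl _ _) Hv.
  have Hhv : vmax h < x by apply: leq_ltn_trans (leq_maxr _ _) Hv.
  have Hfg : forall y, free_in y g -> nu y = nu' y /\ nu y <= c.
    by move=> y Hy; apply: Hf; rewrite Hy.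
  have Hfh : forall y, free_in y h -> nu y = nu' y /\ nu y <= c.
    by move=> y Hy; apply: Hf; rewrite Hy orbT.
  by rewrite (IHg x w nu nu' c Hgv Hx Hc Hfg) (IHh x w nu nu' c Hhv Hx Hc Hfh).
- have Hzx : x != z by apply/eqP => E; move: Hv; rewrite E; lia.
  have Hgv : vmax g < x by apply: leq_ltn_trans (leq_maxr _ _) Hv.
  have Hf' : forall i, i <= c -> forall y, free_in y g -> upd nu z i y = upd nu' z i y /\ upd nu z i y <= c.
    move=> i Hi y Hy; case: (eqVneq y z) => [->|Hyz]; first by rewrite !upd_same.
    rewrite !upd_other //; apply: Hf; by rewrite eq_sym Hyz.
  rewrite Hsz //; split.
    move=> [i [Hi [Hic Hs]]]; rewrite upd_same upd_other // Hx in Hic.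
    have Hic' : i <= c by case: Hic => H; lia.
    exists i; split; first by lia.
    by apply/(IH x w (upd nu z i) (upd nu' z i) c) => //; [rewrite upd_other|apply: Hf'].
  move=> [i [Hi Hs]]; exists i; split; first by lia.
  rewrite upd_same upd_other // Hx; split; first by lia.
  by apply/(IH x w (upd nu z i) (upd nu' z i) c) => //; [rewrite upd_other|apply: Hf'; lia].
- have Hzx : x != z by apply/eqP => E; move: Hv; rewrite E; lia.
  have Hgv : vmax g < x by apply: leq_ltn_trans (leq_maxr _ _) Hv.
  have Hf' : forall i, i <= c -> forall y, free_in y g -> upd nu z i y = upd nu' z i y /\ upd nu z i y <= c.
    move=> i Hi y Hy; case: (eqVneq y z) => [->|Hyz]; first by rewrite !upd_same.
    rewrite !upd_other //; apply: Hf; by rewrite eq_sym Hyz.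
  rewrite Hsz //; split.
    move=> H i Hi.
    have Hi' : i <= c by lia.
    have Hux : upd nu z i x = c by rewrite upd_other.
    apply/(IH x w (upd nu z i) (upd nu' z i) c Hgv Hux Hc (Hf' i Hi')).
    apply: H; first by lia.
    rewrite upd_same upd_other // Hx.
    by case: (ltngtP i c) => H'; [left|lia|right].
  move=> H i Hi; rewrite upd_same upd_other // Hx => Hic.
  have Hic' : i <= c by case: Hic => H'; lia.
  have Hux : upd nu z i x = c by rewrite upd_other.
  apply/(IH x w (upd nu z i) (upd nu' z i) c Hgv Hux Hc (Hf' i Hic')).
  by apply: H; lia.
Qed.


Definition tr2 (x0 : nat) (t : term) : term := if t is TMin then TVar x0 else t.

Definition bigAnd (A : finType) (fs : seq (formula A)) : formula A :=
  foldr (@FAnd A) (@FTrue A) fs.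

Lemma sat_bigAnd (A : finType) (w : seq A) nu fs :
  sat w nu (bigAnd fs) <-> forall f, List.In f fs -> sat w nu f.
Proof.
elim: fs => [|f fs IH] /=; first by split => // _ f [].
rewrite IH; split; first by move=> [H1 H2] g [<-|Hg]; [|apply: H2].
by move=> H; split; [apply: H; left|move=> g Hg; apply: H; right].
Qed.

Fixpoint Rel2 (A : finType) (x0 x : nat) (sl : lang A -> seq (lang A * lang A))
   (f : formula A) : formula A :=
  match f with
  | FTrue => @FTrue A
  | FFalse => @FFalse A
  | FLabel a t => FAnd (@FLt A (TVar x0) (tr2 x0 t)) (FLabel a (tr2 x0 t))
  | FLt t1 t2 => @FLt A (tr2 x0 t1) (tr2 x0 t2)
  | FEq t1 t2 => @FEq A (tr2 x0 t1) (tr2 x0 t2)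
  | FPred L t => FAnd (@FLt A (TVar x0) (tr2 x0 t))
       (bigAnd (List.map (fun q => FImp (FPred q.1 (TVar x)) (FPred q.2 (tr2 x0 t))) (sl L)))
  | FNot g => FNot (Rel2 x0 x sl g)
  | FAnd g h => FAnd (Rel2 x0 x sl g) (Rel2 x0 x sl h)
  | FOr g h => FOr (Rel2 x0 x sl g) (Rel2 x0 x sl h)
  | FImp g h => FImp (Rel2 x0 x sl g) (Rel2 x0 x sl h)
  | FExists z g => FExists z (FAnd (FOr (@FLt A (TVar x0) (TVar z)) (@FEq A (TVar x0) (TVar z))) (Rel2 x0 x sl g))
  | FForall z g => FForall z (FImp (FOr (@FLt A (TVar x0) (TVar z)) (@FEq A (TVar x0) (TVar z))) (Rel2 x0 x sl g))
  end.

Lemma tr2_eval (A : finType) (w : seq A) nu nu' x0 p t :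
  tv t < x0 -> nu x0 = p -> p <= size w ->
  (forall y, term_free y t -> nu y = nu' y + p) ->
  eval_term w nu (tr2 x0 t) = eval_term (drop p w) nu' t + p.
Proof.
move=> Ht Hx Hp Hf; case: t Ht Hf => [y| |] //= Ht Hf.
- by apply: Hf.
- by rewrite size_drop; lia.
Qed.

Lemma Rel2_sat (A : finType) (G : lang A -> Prop) sl (f : formula A) :
  forall x0 x (w : seq A) nu nu' p,
  vmax f < x0 -> x0 < x ->
  (forall L, List.In L (preds f) -> good_shift G L (sl L)) ->
  nu x0 = p -> nu x = p.+1 -> p <= size w ->
  (forall y, free_in y f -> nu y = nu' y + p) ->
  (sat w nu (Rel2 x0 x sl f) <-> sat (drop p w) nu' f).
Proof.
elim: f => [| |a t|t1 t2|t1 t2|L t|g IH|g IHg h IHh|g IHg h IHh|g IHg h IHh|z g IH|z g IH]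
  x0 x w nu nu' p /= Hv Hxx HL Hx0 Hx Hp Hf //.
- have E := tr2_eval Hv Hx0 Hp Hf.
  rewrite E Hx0 size_drop.
  split.
    move=> [Hlt [/andP [H1 H2] H3]]; split; first by apply/andP; split; lia.
    by rewrite nth_drop; move: H3; have -> : (eval_term (drop p w) nu' t + p).-1 = p + (eval_term (drop p w) nu' t).-1 by lia.
  move=> [/andP [H1 H2] H3]; split; first by lia.
  split; first by apply/andP; split; lia.
  by move: H3; rewrite nth_drop; have -> : (eval_term (drop p w) nu' t + p).-1 = p + (eval_term (drop p w) nu' t).-1 by lia.
- have E1 := tr2_eval (leq_ltn_trans (leq_maxl _ _) Hv) Hx0 Hp
     (fun y H => Hf y (introT orP (or_introl H))).
  have E2 := tr2_eval (leq_ltn_trans (leq_maxr _ _) Hv) Hx0 Hp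
     (fun y H => Hf y (introT orP (or_intror H))).
  by rewrite E1 E2 ltn_add2r.
- have E1 := tr2_eval (leq_ltn_trans (leq_maxl _ _) Hv) Hx0 Hp
     (fun y H => Hf y (introT orP (or_introl H))).
  have E2 := tr2_eval (leq_ltn_trans (leq_maxr _ _) Hv) Hx0 Hp
     (fun y H => Hf y (introT orP (or_intror H))).
  rewrite E1 E2; split; [by move/addIn|by move->].
- have E := tr2_eval Hv Hx0 Hp Hf.
  have [_ [Hcov Hsh]] := HL L (or_introl erefl).
  rewrite sat_bigAnd E Hx0.
  set e := eval_term (drop p w) nu' t.
  have Htk : 0 < e -> take (e + p).-1 w = take p w ++ take e.-1 (drop p w).
    by move=> He; rewrite -takeD; congr take; lia.
  split.
    move=> [Hlt H]; have He : 0 < e by lia.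
    split => //.
    have [q [Hq Hq1]] := Hcov (take p w).
    have Hin : List.In (FImp (FPred q.1 (TVar x)) (FPred q.2 (tr2 x0 t)))
      (List.map (fun q => FImp (FPred q.1 (TVar x)) (FPred q.2 (tr2 x0 t))) (sl L)).
      by apply/List.in_map_iff; exists q.
    have := H _ Hin; rewrite /= E Hx => /(_ (conj (ltn0Sn _) Hq1)) [_ Hm].
    by apply/(Hsh q Hq (take p w) _ Hq1); rewrite -Htk.
  move=> [He HLe]; split; first by lia.
  move=> g /List.in_map_iff [q [<- Hq]] /=; rewrite Hx E => [[_ Hq1]].
  split; first by lia.
  by rewrite Htk //; apply/(Hsh q Hq (take p w) _ Hq1).
- by rewrite (IH x0 x w nu nu' p).
- have Hgv : vmax g < x0 by apply: leq_ltn_trans (leq_maxl _ _) Hv.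
  have Hhv : vmax h < x0 by apply: leq_ltn_trans (leq_maxr _ _) Hv.
  have HLg : forall L, List.In L (preds g) -> good_shift G L (sl L).
    by move=> L HL'; apply: HL; apply/List.in_app_iff; left.
  have HLh : forall L, List.In L (preds h) -> good_shift G L (sl L).
    by move=> L HL'; apply: HL; apply/List.in_app_iff; right.
  have Hfg : forall y, free_in y g -> nu y = nu' y + p by move=> y Hy; apply: Hf; rewrite Hy.
  have Hfh : forall y, free_in y h -> nu y = nu' y + p by move=> y Hy; apply: Hf; rewrite Hy orbT.
  by rewrite (IHg x0 x w nu nu' p Hgv Hxx HLg Hx0 Hx Hp Hfg) (IHh x0 x w nu nu' p Hhv Hxx HLh Hx0 Hx Hp Hfh).
- have Hgv : vmax g < x0 by apply: leq_ltn_trans (leq_maxl _ _) Hv.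
  have Hhv : vmax h < x0 by apply: leq_ltn_trans (leq_maxr _ _) Hv.
  have HLg : forall L, List.In L (preds g) -> good_shift G L (sl L).
    by move=> L HL'; apply: HL; apply/List.in_app_iff; left.
  have HLh : forall L, List.In L (preds h) -> good_shift G L (sl L).
    by move=> L HL'; apply: HL; apply/List.in_app_iff; right.
  have Hfg : forall y, free_in y g -> nu y = nu' y + p by move=> y Hy; apply: Hf; rewrite Hy.
  have Hfh : forall y, free_in y h -> nu y = nu' y + p by move=> y Hy; apply: Hf; rewrite Hy orbT.
  by rewrite (IHg x0 x w nu nu' p Hgv Hxx HLg Hx0 Hx Hp Hfg) (IHh x0 x w nu nu' p Hhv Hxx HLh Hx0 Hx Hp Hfh).
- have Hgv : vmax g < x0 by apply: leq_ltn_trans (leq_maxl _ _) Hv.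
  have Hhv : vmax h < x0 by apply: leq_ltn_trans (leq_maxr _ _) Hv.
  have HLg : forall L, List.In L (preds g) -> good_shift G L (sl L).
    by move=> L HL'; apply: HL; apply/List.in_app_iff; left.
  have HLh : forall L, List.In L (preds h) -> good_shift G L (sl L).
    by move=> L HL'; apply: HL; apply/List.in_app_iff; right.
  have Hfg : forall y, free_in y g -> nu y = nu' y + p by move=> y Hy; apply: Hf; rewrite Hy.
  have Hfh : forall y, free_in y h -> nu y = nu' y + p by move=> y Hy; apply: Hf; rewrite Hy orbT.
  by rewrite (IHg x0 x w nu nu' p Hgv Hxx HLg Hx0 Hx Hp Hfg) (IHh x0 x w nu nu' p Hhv Hxx HLh Hx0 Hx Hp Hfh).
- have Hz0 : x0 != z by apply/eqP => E; move: Hv; rewrite E; lia.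
  have Hz : x != z by apply/eqP => E; move: Hv Hxx; rewrite E; lia.
  have Hgv : vmax g < x0 by apply: leq_ltn_trans (leq_maxr _ _) Hv.
  have Hf' : forall j y, free_in y g -> upd nu z (j + p) y = upd nu' z j y + p.
    move=> j y Hy; case: (eqVneq y z) => [->|Hyz]; first by rewrite !upd_same.
    rewrite !upd_other //; apply: Hf; by rewrite eq_sym Hyz.
  have Hu0 : forall i, upd nu z i x0 = p by move=> i; rewrite upd_other.
  have Hu : forall i, upd nu z i x = p.+1 by move=> i; rewrite upd_other.
  rewrite size_drop; split.
    move=> [i [Hi [Hic Hs]]]; rewrite upd_same Hu0 in Hic.
    have Ei : i = i - p + p by case: Hic => H; lia.
    exists (i - p); split; first by lia.
    rewrite Ei in Hs.
    by apply/(IH x0 x w (upd nu z (i - p + p)) (upd nu' z (i - p)) p Hgv Hxx HL (Hu0 _) (Hu _) Hp (Hf' (i - p))).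
  move=> [j [Hj Hs]]; exists (j + p); split; first by lia.
  rewrite upd_same Hu0; split; first by case: (ltngtP p (j + p)) => H; [left|lia|right].
  by apply/(IH x0 x w (upd nu z (j + p)) (upd nu' z j) p Hgv Hxx HL (Hu0 _) (Hu _) Hp (Hf' j)).
- have Hz0 : x0 != z by apply/eqP => E; move: Hv; rewrite E; lia.
  have Hz : x != z by apply/eqP => E; move: Hv Hxx; rewrite E; lia.
  have Hgv : vmax g < x0 by apply: leq_ltn_trans (leq_maxr _ _) Hv.
  have Hf' : forall j y, free_in y g -> upd nu z (j + p) y = upd nu' z j y + p.
    move=> j y Hy; case: (eqVneq y z) => [->|Hyz]; first by rewrite !upd_same.
    rewrite !upd_other //; apply: Hf; by rewrite eq_sym Hyz.
  have Hu0 : forall i, upd nu z i x0 = p by move=> i; rewrite upd_other.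
  have Hu : forall i, upd nu z i x = p.+1 by move=> i; rewrite upd_other.
  rewrite size_drop; split.
    move=> H j Hj.
    apply/(IH x0 x w (upd nu z (j + p)) (upd nu' z j) p Hgv Hxx HL (Hu0 _) (Hu _) Hp (Hf' j)).
    apply: H; first by lia.
    rewrite upd_same Hu0.
    by case: (ltngtP p (j + p)) => H; [left|lia|right].
  move=> H i Hi; rewrite upd_same Hu0 => Hic.
  have Ei : i = i - p + p by case: Hic => H'; lia.
  rewrite Ei.
  apply/(IH x0 x w (upd nu z (i - p + p)) (upd nu' z (i - p)) p Hgv Hxx HL (Hu0 _) (Hu _) Hp (Hf' (i - p))).
  by apply: H; lia.
Qed.


Lemma free_tr1 x y t : term_free y (tr1 x t) -> term_free y t \/ y = x.
Proof. by case: t => [z| |] //= /eqP ->; [left|right]. Qed.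

Lemma free_tr2 x0 y t : term_free y (tr2 x0 t) -> term_free y t \/ y = x0.
Proof. by case: t => [z| |] //= /eqP ->; [left|right]. Qed.

Lemma free_Rel1 (A : finType) (f : formula A) x y :
  free_in y (Rel1 x f) -> free_in y f \/ y = x.
Proof.
elim: f => //=.
- move=> a t /orP [/orP [H|/eqP H]|H]; try by apply: free_tr1.
  by right.
- move=> t1 t2 /orP [] /free_tr1 [] ->; rewrite ?orbT; by [left|right].
- move=> t1 t2 /orP [] /free_tr1 [] ->; rewrite ?orbT; by [left|right].
- by move=> L t /free_tr1.
- move=> g IHg h IHh /orP [] /[dup] H; [case/IHg|case/IHh] => ->; rewrite ?orbT; by [left|right].
- move=> g IHg h IHh /orP [] /[dup] H; [case/IHg|case/IHh] => ->; rewrite ?orbT; by [left|right].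
- move=> g IHg h IHh /orP [] /[dup] H; [case/IHg|case/IHh] => ->; rewrite ?orbT; by [left|right].
- move=> z g IH /andP [Hzy /orP [/orP [/orP [/eqP E|/eqP E]|/orP [/eqP E|/eqP E]]|H]].
  + by move: Hzy; rewrite E eqxx.
  + by right.
  + by move: Hzy; rewrite E eqxx.
  + by right.
  + by case: (IH H) => [H'|->]; [left; rewrite Hzy H'|right].
- move=> z g IH /andP [Hzy /orP [/orP [/orP [/eqP E|/eqP E]|/orP [/eqP E|/eqP E]]|H]].
  + by move: Hzy; rewrite E eqxx.
  + by right.
  + by move: Hzy; rewrite E eqxx.
  + by right.
  + by case: (IH H) => [H'|->]; [left; rewrite Hzy H'|right].
Qed.

Lemma free_bigAnd (A : finType) (fs : seq (formula A)) y :
  free_in y (bigAnd fs) -> exists f, List.In f fs /\ free_in y f.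
Proof.
elim: fs => [|f fs IH] //= /orP [H|/IH [g [Hg Hy]]]; first by exists f; split; [left|].
by exists g; split; [right|].
Qed.

Lemma free_Rel2 (A : finType) sl (f : formula A) x0 x y :
  free_in y (Rel2 x0 x sl f) -> free_in y f \/ y = x0 \/ y = x.
Proof.
elim: f => //=.
- move=> a t /orP [/orP [/eqP H|H]|H].
  + by right; left.
  + by case/free_tr2: H; tauto.
  + by case/free_tr2: H; tauto.
- move=> t1 t2 /orP [] /free_tr2 [] ->; rewrite ?orbT; by [left|right; left].
- move=> t1 t2 /orP [] /free_tr2 [] ->; rewrite ?orbT; by [left|right; left].
- move=> L t /orP [/orP [/eqP H|H]|/free_bigAnd [g [/List.in_map_iff [q [<- Hq]] Hy]]].
  + by right; left.
  + by case/free_tr2: H; tauto.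
  + move: Hy => /= /orP [/eqP ->|H]; first by right; right.
    by case/free_tr2: H; tauto.
- by move=> g IHg h IHh /orP [/IHg|/IHh] [H1|H2]; [left; rewrite H1|right|left; rewrite H1 orbT|right].
- by move=> g IHg h IHh /orP [/IHg|/IHh] [H1|H2]; [left; rewrite H1|right|left; rewrite H1 orbT|right].
- by move=> g IHg h IHh /orP [/IHg|/IHh] [H1|H2]; [left; rewrite H1|right|left; rewrite H1 orbT|right].
- move=> z g IH /andP [Hzy /orP [/orP [/orP [/eqP E|/eqP E]|/orP [/eqP E|/eqP E]]|H]].
  + by right; left.
  + by move: Hzy; rewrite E eqxx.
  + by right; left.
  + by move: Hzy; rewrite E eqxx.
  + by case: (IH H) => [H'|]; [left; rewrite Hzy H'|right].
- move=> z g IH /andP [Hzy /orP [/orP [/orP [/eqP E|/eqP E]|/orP [/eqP E|/eqP E]]|H]].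
  + by right; left.
  + by move: Hzy; rewrite E eqxx.
  + by right; left.
  + by move: Hzy; rewrite E eqxx.
  + by case: (IH H) => [H'|]; [left; rewrite Hzy H'|right].
Qed.

Lemma preds_Rel1 (A : finType) (G : lang A -> Prop) (f : formula A) x :
  preds_in G f -> preds_in G (Rel1 x f).
Proof. elim: f => //= *; intuition. Qed.

Lemma preds_bigAnd (A : finType) (G : lang A -> Prop) (fs : seq (formula A)) :
  (forall f, List.In f fs -> preds_in G f) -> preds_in G (bigAnd fs).
Proof.
elim: fs => [|f fs IH] //= H; split; first by apply: H; left.
by apply: IH => g Hg; apply: H; right.
Qed.

Lemma preds_Rel2 (A : finType) (G : lang A -> Prop) sl (f : formula A) x0 x :
  (forall L, G L -> good_shift G L (sl L)) ->
  preds_in G f -> preds_in G (Rel2 x0 x sl f).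
Proof.
move=> Hsl; elim: f => //=; try by move=> *; intuition.
move=> L t HL; split => //; apply: preds_bigAnd => g /List.in_map_iff [q [<- Hq]] /=.
by have [H _] := Hsl L HL; have := H q Hq; tauto.
Qed.


Lemma FO_base (A : finType) (G : lang A -> Prop) L : G L -> FO_def G L.
Proof.
move=> GL; exists (FPred L TMax); split; first by [].
split; first by [].
by move=> w /=; rewrite take_size; split => // [[]].
Qed.

Definition letterF (A : finType) (a : A) : formula A :=
  FExists 0 (FAnd (FLabel a (TVar 0)) (FForall 1 (FOr (@FEq A (TVar 1) TMin)
     (FOr (@FEq A (TVar 1) TMax) (@FEq A (TVar 1) (TVar 0)))))).

Lemma FO_letter (A : finType) (G : lang A -> Prop) a : FO_def G (lang_letter a).
Proof.
exists (letterF a); split; first by case=> [|[|y]].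
split; first by [].
move=> w; rewrite /lang_letter /letterF /= /upd /=; split.
  move=> ->; exists 1; split => //; split => //= j Hj; lia.
move=> [i [Hi [[/andP [H1 H2] H3] H4]]].
have Hn : size w = 1.
  have := H4 1; have := H4 2; lia.
move: H3; case: w Hn H2 {Hi H4} => [|c [|d w]] //= _ H2.
have Ei : i = 1 by lia.
by rewrite Ei /= => ->.
Qed.

Lemma FO_union (A : finType) (G : lang A -> Prop) L1 L2 :
  FO_def G L1 -> FO_def G L2 -> FO_def G (lang_union L1 L2).
Proof.
move=> [f1 [S1 [P1 H1]]] [f2 [S2 [P2 H2]]]; exists (FOr f1 f2); split.
  by move=> x /=; rewrite negb_or S1 S2.
split; first by [].
by move=> w; rewrite /lang_union H1 H2.
Qed.

Lemma FO_compl (A : finType) (G : lang A -> Prop) L :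
  FO_def G L -> FO_def G (lang_compl L).
Proof.
move=> [f [S [P H]]]; exists (FNot f); split => //; split => // w.
by rewrite /lang_compl H.
Qed.

Lemma FO_concat (A : finType) (G : lang A -> Prop) L1 L2 :
  group_prevariety G -> FO_def G L1 -> FO_def G L2 -> FO_def G (lang_concat L1 L2).
Proof.
move=> HG [f1 [S1 [P1 H1]]] [f2 [S2 [P2 H2]]].
have Hsl : forall L, exists l, G L -> good_shift G L l.
  move=> L; case: (classic (G L)) => HL; last by exists [::].
  by have [l Hl] := shift_exists HG HL; exists l.
pose sl := fun L => proj1_sig (constructive_indefinite_description _ (Hsl L)).
have Hsl' : forall L, G L -> good_shift G L (sl L).
  by move=> L; rewrite /sl; case: (constructive_indefinite_description _ _).
set N := (maxn (vmax f1) (vmax f2)).+1.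
have Hv1 : vmax f1 < N by rewrite /N ltnS leq_maxl.
have Hv2 : vmax f2 < N by rewrite /N ltnS leq_maxr.
pose x0 := N; pose x := N.+1; pose z := N.+2.
exists (FExists x0 (FExists x (FAnd (@FLt A (TVar x0) (TVar x))
  (FAnd (FNot (FExists z (FAnd (@FLt A (TVar x0) (TVar z)) (@FLt A (TVar z) (TVar x)))))
        (FAnd (Rel1 x f1) (Rel2 x0 x sl f2)))))).
split.
  move=> y; apply/negP => /= /andP [Hy0 /andP [Hy1 /orP [/orP [/eqP E|/eqP E]|/orP [H|/orP [H|H]]]]].
  - by move: Hy0; rewrite E eqxx.
  - by move: Hy1; rewrite E eqxx.
  - move: H => /andP [Hz /orP [/orP [/eqP E|/eqP E]|/orP [/eqP E|/eqP E]]];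
      [move: Hy0|move: Hz|move: Hz|move: Hy1]; by rewrite E eqxx.
  - case: (free_Rel1 H) => [H'|E]; first by have := S1 y; rewrite H'.
    by move: Hy1; rewrite E eqxx.
  - case: (free_Rel2 H) => [H'|[E|E]]; first by have := S2 y; rewrite H'.
      by move: Hy0; rewrite E eqxx.
    by move: Hy1; rewrite E eqxx.
split.
  split; first by [].
  split; first by [].
  split; first by apply: preds_Rel1.
  by apply: preds_Rel2.
move=> w.
have Ex0 : forall nu i0 i, upd (upd nu x0 i0) x i x0 = i0.
  by move=> nu i0 i; rewrite upd_other ?upd_same // /x /x0; apply/eqP; lia.
have Ex : forall nu i0 i, upd (upd nu x0 i0) x i x = i by move=> nu i0 i; rewrite upd_same.
have Ez0 : forall nu i0 i k, upd (upd (upd nu x0 i0) x i) z k x0 = i0.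
  by move=> nu i0 i k; rewrite upd_other ?Ex0 //; apply/eqP; rewrite /z /x0; lia.
have Ezx : forall nu i0 i k, upd (upd (upd nu x0 i0) x i) z k x = i.
  by move=> nu i0 i k; rewrite upd_other ?Ex //; apply/eqP; rewrite /z /x; lia.
have Ezz : forall nu i0 i k, upd (upd (upd nu x0 i0) x i) z k z = k.
  by move=> nu i0 i k; rewrite upd_same.
have HP2 : forall L, List.In L (preds f2) -> good_shift G L (sl L).
  by move=> L HL; apply: Hsl'; apply: (preds_G P2).
split.
  move=> [u [v [-> [Hu Hv]]]].
  exists (size u); split; first by rewrite size_cat; lia.
  exists (size u).+1; split; first by rewrite size_cat; lia.
  rewrite /= !Ex0 !Ex; split; first by [].
  split.
    by move=> [k [_]]; rewrite Ez0 Ezx Ezz; lia.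
  split.
    apply/(Rel1_sat (nu' := fun _ => 0) (c := (size u).+1)) => //.
    + by rewrite /x; lia.
    + by rewrite size_cat; lia.
    + by move=> y Hy; have := S1 y; rewrite Hy.
    + by rewrite /= take_size_cat //; apply/H1.
  have Hpw : size u <= size (u ++ v) by rewrite size_cat leq_addr.
  have Hf2 : forall y, free_in y f2 -> upd (upd (fun _ => 0) x0 (size u)) x (size u).+1 y = 0 + size u.
    by move=> y Hy; have := S2 y; rewrite Hy.
  apply/(@Rel2_sat A G sl f2 x0 x (u ++ v) _ (fun _ => 0) (size u) Hv2 (ltnSn _) HP2 (Ex0 _ _ _) (Ex _ _ _) Hpw Hf2).
  by rewrite drop_size_cat //; apply/H2.
move=> [i0 [Hi0 [i [Hi [Hlt [Hsucc [Hr1 Hr2]]]]]]].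
rewrite /= Ex0 Ex in Hlt.
have Ei : i = i0.+1.
  case: (ltngtP i i0.+1) => // Hc; first by lia.
  exfalso; apply: Hsucc; exists i0.+1; split; first by lia.
  by rewrite /= Ez0 Ezx Ezz; lia.
subst i.
exists (take i0 w), (drop i0 w); split; first by rewrite cat_take_drop.
split.
  have Hv1' : vmax f1 < x by rewrite /x; lia.
  have Hc : 0 < i0.+1 <= (size w).+1 by apply/andP; split.
  have Hf1 : forall y, free_in y f1 -> upd (upd (fun _ => 0) x0 i0) x i0.+1 y = (fun _ => 0) y /\ upd (upd (fun _ => 0) x0 i0) x i0.+1 y <= i0.+1.
    by move=> y Hy; have := S1 y; rewrite Hy.
  by apply/H1; apply/(@Rel1_sat A f1 x w _ (fun _ => 0) i0.+1 Hv1' (Ex _ _ _) Hc Hf1).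
have Hpw : i0 <= size w by lia.
have Hf2 : forall y, free_in y f2 -> upd (upd (fun _ => 0) x0 i0) x i0.+1 y = 0 + i0.
  by move=> y Hy; have := S2 y; rewrite Hy.
apply/H2; apply/(@Rel2_sat A G sl f2 x0 x w _ (fun _ => 0) i0 Hv2 (ltnSn _) HP2 (Ex0 _ _ _) (Ex _ _ _) Hpw Hf2).
by [].
Qed.

Lemma SF_in_FO (A : finType) (G : lang A -> Prop) L :
  group_prevariety G -> SF G L -> FO_def G L.
Proof.
move=> HG; elim=> {L}.
- by move=> L HL; apply: FO_base.
- by move=> a; apply: FO_letter.
- by move=> L1 L2 _ H1 _ H2; apply: FO_union.
- by move=> L _ H; apply: FO_compl.
- by move=> L1 L2 _ H1 _ H2; apply: FO_concat.
Qed.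


Theorem corollary6p6 (A : finType) (G : lang A -> Prop) :
  group_prevariety G ->
  forall L : lang A, SF G L <-> FO_def G L.
Proof.
move=> HG L; split; [exact: SF_in_FO | exact: FO_in_SF].
Qed.
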